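(* Let $c\in\mathbb{C}$ and $\alpha,\bar\alpha,\beta,\bar\beta\in\mathbb{C}$ with $\alpha,\bar\alpha\neq0$, $\beta\neq\bar\beta$ and $\beta-\bar\beta+c=0$. Consider $TSV(c)$-module extensions $0\to M_{\bar\alpha,\bar\beta}\to E\to M_{\alpha,\beta}\to0$ written as $E=\mathbb{C}[\partial]v_{\bar\alpha}\oplus\mathbb{C}[\partial]v_\alpha$ with $L_\lambda v_\alpha=(\partial+\alpha\lambda+\beta)v_\alpha+f(\partial,\lambda)v_{\bar\alpha}$, $Y_\lambda v_\alpha=g(\partial,\lambda)v_{\bar\alpha}$, $M_\lambda v_\alpha=h(\partial,\lambda)v_{\bar\alpha}$. Then $h=0$, every such extension is equivalent to one with $f=0$, and an extension with $f=h=0$ is nontrivial iff $g\neq0$. The nonzero $g$ that occur (with $f=h=0$) are exactly the nonzero scalar multiples of the following, under the stated conditions ($m$ = total degree of $g$): (a) $m=0$: $\alpha-\bar\alpha=-\frac12$, $g=1$; (b) $m=1$: $\alpha-\bar\alpha=\frac12$, $g=\partial+2\bar\alpha\lambda-2\bar\alpha c+\bar\beta$; (c) $m=2$: $\alpha=1$, $\bar\alpha=-\frac12$, $g=\partial^2+2(1+2\bar\alpha)\partial\lambda+2\bar\alpha\lambda^2+a_{10}\partial+a_{11}\lambda+a_{00}$ with $a_{10}=2\bar\beta-2(1+2\bar\alpha)c$, $a_{11}=-4c\bar\alpha+2(1+2\bar\alpha)\bar\beta$, $a_{00}=\bar\beta^2-2c\bar\beta(1+2\bar\alpha)+2c^2\bar\alpha$;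 and no other degrees occur.
   Context: A conformal module over a Lie conformal algebra $\mathcal{R}$ is a $\mathbb{C}[\partial]$-module $V$ with $\mathbb{C}$-linear maps $a\otimes v\mapsto a_\lambda v\in V[\lambda]$ such that $(\partial a)_\lambda v=-\lambda a_\lambda v$, $a_\lambda(\partial v)=(\partial+\lambda)a_\lambda v$, and $a_\lambda(b_\mu v)-b_\mu(a_\lambda v)=[a_\lambda b]_{\lambda+\mu}v$. $TSV(c)$ ($c\in\mathbb{C}$) is the free $\mathbb{C}[\partial]$-module on $L,Y,M$ with $[L_\lambda L]=(\partial+2\lambda)L$, $[L_\lambda Y]=(\partial+\frac32\lambda+c)Y$, $[L_\lambda M]=(\partial+2c)M$, $[Y_\lambda Y]=(\partial+2\lambda)(-\partial-2c)M$, $[Y_\lambda M]=[M_\lambda M]=0$. For $\alpha\neq0$, $M_{\alpha,\beta}=\mathbb{C}[\partial]v$ has $L_\lambda v=(\partial+\alpha\lambda+\beta)v$, $Y_\lambda v=M_\lambda v=0$. In $E$, $\mathbb{C}[\partial]v_{\bar\alpha}$ is a submodule isomorphic to $M_{\bar\alpha,\bar\beta}$. Equivalence of extensions means a module homomorphism between middle terms compatible with the identities on the end terms; trivial means equivalent to the direct sum extension. *)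

(* Defs.v *)
From HB Require Import structures.
From mathcomp Require Import all_boot all_order all_algebra.
Set Implicit Arguments. Unset Strict Implicit. Unset Printing Implicit Defensive.
Import Order.TTheory GRing.Theory Num.Theory.
Local Open Scope ring_scope.

(* free generators L, Y, M of TSV(c) over C[d] *)
Inductive gen := GL | GY | GM.
(* basis of E: Vb = v_{bar alpha} (submodule), Va = v_alpha *)
Inductive bas := Vb | Va.

Section TSV.
Variable C : numClosedFieldType.

Definition sumg (F : gen -> C) : C := F GL + F GY + F GM.
Definition sumb (F : bas -> C) : C := F Vb + F Va.

(* two-variable polynomials p(d, l) : {poly {poly C}}, outer variable = lambda,
   inner variable = d (partial) *)
Definition ev2 (p : {poly {poly C}}) (d l : C) : C := (p.[l%:P]).[d].
Definition Dpar : {poly {poly C}} := ('X)%:P.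
Definition Lam  : {poly {poly C}} := 'X.
Definition cst (k : C) : {poly {poly C}} := k%:P%:P.

Variables (c al be alb beb : C).

(* [X_lambda Z] = sum_W br X Z W (d, lambda) W  in TSV(c);
   the pairs not listed in the paper are obtained by skew-symmetry
   [b_l a] = -[a_{-l-d} b]. *)
Definition br (X Z W : gen) (d l : C) : C :=
  match X, Z, W with
  | GL, GL, GL => d + 2%:R * l
  | GL, GY, GY => d + 3%:R / 2%:R * l + c
  | GL, GM, GM => d + 2%:R * c
  | GY, GL, GY => d / 2%:R + 3%:R / 2%:R * l - c
  | GM, GL, GM => - (d + 2%:R * c)
  | GY, GY, GM => (d + 2%:R * l) * (- d - 2%:R * c)
  | _, _, _ => 0
  end.

(* X_lambda e_i = sum_k ecoef f g h X i k (d, lambda) e_k in E *)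
Definition ecoef (f g h : {poly {poly C}}) (X : gen) (i k : bas) (d l : C) : C :=
  match X, i, k with
  | GL, Vb, Vb => d + alb * l + beb
  | GL, Va, Vb => ev2 f d l
  | GL, Va, Va => d + al * l + be
  | GY, Va, Vb => ev2 g d l
  | GM, Va, Vb => ev2 h d l
  | _, _, _ => 0
  end.

(* lambda-action of an element sum_X s_X(d) X of R (s given as functions of d)
   on an element sum_i w_i(d) e_i of E (possibly depending on further
   parameters), extended by conformal sesquilinearity:
   (p(d)X)_l (q(d) e_i) = p(-l) q(d+l) X_l e_i. *)
Definition actf (f g h : {poly {poly C}}) (s : gen -> C -> C) (l : C)
    (w : bas -> C -> C) : bas -> C -> C :=
  fun k d => sumg (fun X => sumb (fun i => s X (- l) * w i (d + l) * ecoef f g h X i k d l)).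

Definition polF (A : Type) (a : A -> {poly C}) : A -> C -> C := fun x y => (a x).[y].

(* [a_l b] for a, b in R, as coefficients (functions of d) on L, Y, M *)
Definition brk (a b : gen -> {poly C}) (l : C) : gen -> C -> C :=
  fun W d => sumg (fun X => sumg (fun Z => (a X).[- l] * (b Z).[d + l] * br X Z W d l)).

(* E (given by f, g, h) is a conformal TSV(c)-module: the Jacobi-type axiom
   a_l (b_m w) - b_m (a_l w) = [a_l b]_{l+m} w for all a, b in R, w in E,
   as an identity in E[l, m] (checked pointwise in d, l, m). *)
Definition is_ext (f g h : {poly {poly C}}) : Prop :=
  forall (a b : gen -> {poly C}) (w : bas -> {poly C}) (l m d : C) (k : bas),
    actf f g h (polF a) l (actf f g h (polF b) m (polF w)) k d
    - actf f g h (polF b) m (actf f g h (polF a) l (polF w)) k d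
    = actf f g h (brk a b l) (l + m) (polF w) k d.

(* C[d]-linear map E -> E' with phi(e_i) = sum_k phi i k e'_k *)
Definition phiF (phi : bas -> bas -> {poly C}) (u : bas -> C -> C) : bas -> C -> C :=
  fun k d => sumb (fun i => u i d * (phi i k).[d]).

(* equivalence of extensions: a module homomorphism E -> E' compatible with
   the identity on M_{bar alpha, bar beta} (inclusion) and on M_{alpha,beta}
   (projection) *)
Definition ext_equiv (f g h f' g' h' : {poly {poly C}}) : Prop :=
  exists phi : bas -> bas -> {poly C},
    [/\ forall (a : gen -> {poly C}) (w : bas -> {poly C}) (l d : C) (k : bas),
          phiF phi (actf f g h (polF a) l (polF w)) k d
          = actf f' g' h' (polF a) l (phiF phi (polF w)) k d,
        forall (q : {poly C}) (k : bas) (d : C),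
          phiF phi (fun i x => if i is Vb then q.[x] else 0) k d
          = (if k is Vb then q.[d] else 0)
      & forall (w : bas -> {poly C}) (d : C),
          phiF phi (polF w) Va d = (w Va).[d]].

Definition ext_trivial (f g h : {poly {poly C}}) : Prop :=
  ext_equiv f g h 0 0 0.

End TSV.

(* Main.v *)
Require Import Defs.
From HB Require Import structures.
From mathcomp Require Import all_boot all_order all_algebra.
Import GRing.Theory Num.Theory.
Local Open Scope ring_scope.
From mathcomp Require Import ring.
Set Implicit Arguments. Unset Strict Implicit. Unset Printing Implicit Defensive.


Lemma poly_eq0_pt (C : numClosedFieldType) (p : {poly C}) :
  (forall x, p.[x] = 0) -> p = 0.
Proof.
move=> H; apply: (@roots_geq_poly_eq0 _ p [seq i%:R | i <- iota 0 (size p)]).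
- by apply/allP => x /mapP [i _ ->]; rewrite /root H.
- rewrite map_inj_uniq ?iota_uniq // => i j /eqP; rewrite eqr_nat => /eqP //.
- by rewrite size_map size_iota.
Qed.

Lemma ev2_eq0 (C : numClosedFieldType) (p : {poly {poly C}}) :
  (forall d l, ev2 p d l = 0) -> p = 0.
Proof.
move=> H; apply/polyP => i; rewrite coef0.
apply: poly_eq0_pt => d.
have : map_poly (horner_eval d) p = 0.
  apply: poly_eq0_pt => l.
  have := horner_map (horner_eval d) p l%:P.
  rewrite /= !horner_evalE hornerC => ->; exact: H.
move=> E; have := congr1 (fun q : {poly C} => q`_i) E.
by rewrite coef_map coef0 /= horner_evalE.
Qed.




Definition gsel (C : numClosedFieldType) (X : gen) : gen -> {poly C} :=
  fun Z => match X, Z with GL, GL | GY, GY | GM, GM => 1 | _, _ => 0 end.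
Definition wVa (C : numClosedFieldType) : bas -> {poly C} :=
  fun i => match i with Va => 1 | Vb => 0 end.

Ltac lin := let E := fresh "E" in let E' := fresh "E" in
  move=> E; move/eqP: E; rewrite -subr_eq0 => /eqP E;
  have E' := E; rewrite -opprB in E'; move/eqP: E'; rewrite oppr_eq0 => /eqP E';
  apply/eqP; rewrite -subr_eq0; apply/eqP;
  first [ apply: (etrans _ E); by field
        | apply: (etrans _ E'); by field ].

Section S.
Variables (C : numClosedFieldType) (c al be alb beb : C).

Lemma extY f g h : is_ext c al be alb beb f g h -> forall d l m,
  ev2 g (d+l) m * (d + alb * l + beb) - (d + m + al * l + be) * ev2 g d m
  = (l / 2%:R - m + c) * ev2 g d (l+m).
Proof.
move=> H d l m; have := H (gsel C GL) (gsel C GY) (wVa C) l m d Vb.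
rewrite /actf /brk /sumg /sumb /polF /=.
rewrite !hornerE /= => E.
move/eqP: E; rewrite -subr_eq0 => /eqP E; apply/eqP; rewrite -subr_eq0; apply/eqP.
rewrite -[X in _ = X]E.
by field.
Qed.

Lemma ev20 (d l : C) : ev2 (0 : {poly {poly C}}) d l = 0.
Proof. by rewrite /ev2 !horner0. Qed.

Lemma backY g : (forall d l m,
  ev2 g (d+l) m * (d + alb * l + beb) - (d + m + al * l + be) * ev2 g d m
  = (l / 2%:R - m + c) * ev2 g d (l+m)) -> is_ext c al be alb beb 0 g 0.
Proof.
move=> H a b w l m d k.
rewrite /actf /brk /sumg /sumb /polF /=.
rewrite !ev20.
have e1 : -(l+m)+l = -m by ring.
have e2 : d+m+l = d+l+m by ring.
have e3 : d+(l+m) = d+l+m by ring.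
rewrite e1 e2 e3.
case: k => /=; last by field.
have E1 := H d l m. have E2 := H d m l. rewrite (addrC m l) in E2.
apply/eqP; rewrite -subr_eq0; apply/eqP.
rewrite -[RHS](_ : (a GL).[-l] * (b GY).[-m] * (w Va).[d+l+m] *
   (ev2 g (d+l) m * (d + alb * l + beb) - (d + m + al * l + be) * ev2 g d m
  - (l / 2%:R - m + c) * ev2 g d (l+m))
  - (a GY).[-l] * (b GL).[-m] * (w Va).[d+l+m] *
   (ev2 g (d+m) l * (d + alb * m + beb) - (d + l + al * m + be) * ev2 g d l
  - (m / 2%:R - l + c) * ev2 g d (l+m)) = 0); last first.
  by rewrite E1 E2 !subrr !mulr0 subrr.
by field.
Qed.

Lemma extM f g h : is_ext c al be alb beb f g h -> forall d l m,
  (l - m) * (l + m - 2%:R * c) * ev2 h d (l+m) = 0.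
Proof.
move=> H d l m; have := H (gsel C GY) (gsel C GY) (wVa C) l m d Vb.
rewrite /actf /brk /sumg /sumb /polF /= !hornerE /=.
lin.
Qed.

Lemma extL0 f g h : is_ext c al be alb beb f g h -> forall d l,
  (be - beb) * ev2 f d l = (d + al * l + be) * ev2 f d 0 - ev2 f (d+l) 0 * (d + alb * l + beb).
Proof.
move=> H d l; have := H (gsel C GL) (gsel C GL) (wVa C) l 0 d Vb.
rewrite /actf /brk /sumg /sumb /polF /= !hornerE /= !addr0.
lin.
Qed.

Lemma ev2M (p q : {poly {poly C}}) d l : ev2 (p * q) d l = ev2 p d l * ev2 q d l.
Proof. by rewrite /ev2 !hornerM. Qed.

Lemma ext_h0 f g h : is_ext c al be alb beb f g h -> h = 0.
Proof.
move=> H.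
have H1 : forall d t, (t - 2%:R * c) * ev2 h d t = 0.
  move=> d t; have := extM H d ((t+1)/2%:R) ((t-1)/2%:R).
  have -> : (t + 1) / 2%:R + (t - 1) / 2%:R = t by field.
  have -> : (t + 1) / 2%:R - (t - 1) / 2%:R = 1 by field.
  by rewrite mul1r.
have : (Lam C - cst (2%:R * c)) * h = 0.
  apply: ev2_eq0 => d t; rewrite ev2M -[RHS](H1 d t); congr (_ * _).
  by rewrite /ev2 /Lam /cst !hornerE.
by move/eqP; rewrite mulf_eq0 /Lam /cst polyXsubC_eq0 /= => /eqP.
Qed.

Lemma horner1 (x : C) : (1 : {poly C}).[x] = 1.
Proof. by rewrite -polyC1 hornerC. Qed.

Definition phiP (p : {poly C}) : bas -> bas -> {poly C} :=
  fun i k => match i, k with Vb, Vb => 1 | Va, Va => 1 | Va, Vb => p | Vb, Va => 0 end.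

Lemma equiv_f f g : be != beb -> is_ext c al be alb beb f g 0 ->
  ext_equiv al be alb beb f g 0 0 g 0.
Proof.
move=> nb H; exists (phiP (- (be - beb)^-1 *: f.[0])); split.
- move=> a w l d k.
  have Ef : ev2 f d l = ((d + al * l + be) * ev2 f d 0 - ev2 f (d+l) 0 * (d + alb * l + beb)) / (be - beb).
    rewrite -(extL0 H) mulrC mulrA mulVf ?mul1r //. by rewrite subr_eq0.
  have nb' : be - beb != 0 by rewrite subr_eq0.
  rewrite /ev2 polyC0 in Ef.
  case: k; rewrite /phiF /actf /sumg /sumb /polF /phiP /= ?ev20 /ev2 ?Ef ?hornerZ ?hornerC ?horner1 ?horner0; by field.
- move=> q k d; rewrite /phiF /sumb /phiP; case: k => /=; rewrite ?hornerZ ?hornerC ?horner1 ?horner0 /=; ring.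
- move=> w d; rewrite /phiF /sumb /phiP /polF /=; rewrite ?hornerZ ?hornerC ?horner1 ?horner0; ring.
Qed.

Lemma triv0 : ext_trivial al be alb beb 0 0 0.
Proof.
exists (phiP 0); split.
- move=> a w l d k.
  rewrite /phiF /actf /sumg /sumb /polF /phiP /= !ev20 ?hornerZ ?hornerC ?horner1 ?horner0.
  case: k => /=; rewrite ?hornerC ?horner1 ?horner0; ring.
- move=> q k d; rewrite /phiF /sumb /phiP; case: k => /=; rewrite ?hornerZ ?hornerC ?horner1 ?horner0 /=; ring.
- move=> w d; rewrite /phiF /sumb /phiP /polF /=; rewrite ?hornerZ ?hornerC ?horner1 ?horner0; ring.
Qed.

Lemma triv_g g : ext_trivial al be alb beb 0 g 0 -> g = 0.
Proof.
case=> phi [H1 H2 H3]; apply: ev2_eq0 => d l.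
have := H1 (gsel C GY) (wVa C) l d Vb.
have P1 : (phi Vb Vb).[d] = 1.
  have := H2 1 Vb d; rewrite /phiF /sumb /= horner1 mul1r mul0r addr0 => ->.
  done.
rewrite /phiF /actf /sumg /sumb /polF /= !ev20 P1 /gsel ?horner1 ?horner0.
lin.
Qed.
End S.


Section Cl.
Variables (C : numClosedFieldType) (c al be alb beb : C) (g : {poly {poly C}}).
Hypothesis nalb : alb != 0.
Hypothesis hbe : be - beb + c = 0.
Hypothesis Hs : forall d l m,
  ev2 g (d+l) m * (d + alb * l + beb) - (d + m + al * l + be) * ev2 g d m
  = (l / 2%:R - m + c) * ev2 g d (l+m).

Definition G x y := ev2 g (x - beb) (y + c).

Lemma Gstar x y l : G (x+l) y * (x + alb * l) - (x + y + al * l) * G x y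
  = (l / 2%:R - y) * G x (l + y).
Proof.
have Hb : be = beb - c by apply/eqP; rewrite -subr_eq0; apply/eqP; rewrite -hbe; ring.
have := Hs (x - beb) l (y + c); rewrite /G.
have -> : x - beb + l = x + l - beb by ring.
have -> : l + (y + c) = l + y + c by ring.
have -> : x - beb + alb * l + beb = x + alb * l by ring.
have -> : x - beb + (y + c) + al * l + be = x + y + al * l by rewrite Hb; ring.
have -> : l / 2%:R - (y + c) + c = l / 2%:R - y by ring.
done.
Qed.

Definition Qp : {poly C} := locked ((map_poly (horner_eval (-beb)) g) \Po ('X + c%:P)).

Lemma QpE y : Qp.[y] = G 0 y.
Proof.
rewrite /Qp -lock horner_comp !hornerE /G sub0r.
have := horner_map (horner_eval (-beb)) g (y+c)%:P.
by rewrite /= !horner_evalE hornerC.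
Qed.

Definition Gy y : {poly C} := locked ((g.[(y+c)%:P]) \Po ('X - beb%:P)).

Lemma GyE y x : (Gy y).[x] = G x y.
Proof. by rewrite /Gy -lock horner_comp !hornerE. Qed.

Lemma Qderiv y : y * (Qp^`()).[y] = (al - alb + 2%:R^-1) * Qp.[y].
Proof.
have T0 : alb%:P * ('X * Gy y) - (y%:P + al%:P * 'X) * (Qp.[y])%:P
   - ((2%:R^-1)%:P * 'X - y%:P) * (Qp \Po ('X + y%:P)) = 0.
  apply: poly_eq0_pt => x; rewrite !QpE !(hornerD, hornerN, hornerM, hornerC, hornerX) GyE horner_comp QpE !(hornerD, hornerC, hornerX).
  have := Gstar 0 y x; rewrite !add0r => E.
  move: E; rewrite (addrC x y); lin.
have := congr1 (fun p : {poly C} => (p^`()).[0]) T0.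
rewrite /= !derivE deriv_comp !derivE !(hornerD, hornerN, hornerM, hornerC, hornerX) !horner_comp !(hornerD, hornerN, hornerM, hornerC, hornerX) GyE -QpE !add0r.
lin.
Qed.

Lemma Qcoef j : Qp`_j * j%:R = (al - alb + 2%:R^-1) * Qp`_j.
Proof.
have P0 : 'X * Qp^`() - (al - alb + 2%:R^-1) *: Qp = 0.
  by apply: poly_eq0_pt => y; rewrite hornerD hornerN hornerM hornerX hornerZ Qderiv subrr.
have := congr1 (fun p : {poly C} => p`_j) P0.
rewrite /= coefB coefXM coefZ coef0; case: j => [|j] /=.
  by rewrite mulr0 sub0r => /eqP; rewrite oppr_eq0 => /eqP ->.
by rewrite coef_deriv mulr_natr => /eqP; rewrite subr_eq0 => /eqP.
Qed.

Lemma Gev d l : ev2 g d l = G (d + beb) (l - c).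
Proof. by rewrite /G addrK subrK. Qed.

Lemma G_zero : (forall y, G 0 y = 0) -> g = 0.
Proof.
move=> H; apply: ev2_eq0 => d l; rewrite Gev.
set x := d + beb; set y := l - c.
have [->|nx] := eqVneq x 0; first exact: H.
have := Gstar 0 y x; rewrite !add0r !H !mulr0 subr0 => /eqP.
by rewrite !mulf_eq0 (negbTE nalb) (negbTE nx) /= orbF => /eqP.
Qed.

Lemma Qform : g != 0 -> exists n q, [/\ q != 0, al - alb + 2%:R^-1 = n%:R
   & forall y, G 0 y = q * y ^+ n].
Proof.
move=> ng.
have nQ : Qp != 0.
  apply: contra ng => /eqP Q0; apply/eqP; apply: G_zero => y.
  by rewrite -QpE Q0 horner0.
set n := (size Qp).-1; set q := lead_coef Qp.
have nq : q != 0 by rewrite lead_coef_eq0.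
have Nn : al - alb + 2%:R^-1 = n%:R.
  have := Qcoef n; rewrite -/(lead_coef Qp) -/q mulrC => /(mulIf nq) //.
exists n, q; split => // y.
rewrite -QpE; have -> : Qp = q *: 'X^n.
  apply/polyP => j; rewrite coefZ coefXn.
  have [->|njn] := eqVneq j n; first by rewrite mulr1.
  have := Qcoef j; rewrite Nn mulrC => /eqP; rewrite -subr_eq0 -mulrBl mulf_eq0.
  rewrite subr_eq0 eqr_nat (negbTE njn) /= => /eqP ->; by rewrite mulr0.
by rewrite hornerZ hornerXn.
Qed.
End Cl.


Ltac linK K := let E := fresh "E" in
  move=> E; move/eqP: E; rewrite -subr_eq0 => /eqP E;
  move/(congr1 (fun z => K * z)): E; rewrite /= !mulr0 => E;
  apply/eqP; rewrite -subr_eq0; apply/eqP; apply: (etrans _ E); field; try done; try (by repeat (apply/andP; split)); try (by rewrite -natrD pnatr_eq0).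

Lemma coefXD1 (C : numClosedFieldType) n k : ((('X + 1) ^+ n : {poly C}))`_k = 'C(n, k)%:R.
Proof.
elim: n k => [|n IH] k.
  by rewrite expr0 coef1 bin0n; case: k.
rewrite exprS mulrDl mul1r coefD coefXM; case: k => [|k] /=.
  by rewrite add0r IH !bin0.
by rewrite !IH binS natrD addrC.
Qed.

Section Cl2.
Variables (C : numClosedFieldType) (c al be alb beb : C) (g : {poly {poly C}}).
Hypothesis nalb : alb != 0.
Hypothesis hbe : be - beb + c = 0.
Hypothesis Hs : forall d l m,
  ev2 g (d+l) m * (d + alb * l + beb) - (d + m + al * l + be) * ev2 g d m
  = (l / 2%:R - m + c) * ev2 g d (l+m).
Variables (n : nat) (q : C).
Hypothesis nq : q != 0.
Hypothesis GQ : forall y, G c beb g 0 y = q * y ^+ n.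

Notation G := (G c beb g).

Lemma Rform x y : alb * x * G x y = (y + al * x) * (q * y ^+ n) + (x / 2%:R - y) * (q * (x + y) ^+ n).
Proof.
have := Gstar hbe Hs 0 y x; rewrite !add0r !GQ (addrC x y).
lin.
Qed.

Lemma Gval x y : x != 0 -> G x y = ((y + al * x) * (q * y ^+ n) + (x / 2%:R - y) * (q * (x + y) ^+ n)) / (alb * x).
Proof.
move=> nx; rewrite -Rform; field; by rewrite nx nalb.
Qed.

Lemma nz2 : (1 + 1 : C) != 0.
Proof. by rewrite (_ : 1 + 1 = 2%:R) // pnatr_eq0. Qed.
Lemma nz1 : (1 : C) != 0. Proof. exact: oner_neq0. Qed.

Lemma n3_false : n = 3%N -> al - alb + 2%:R^-1 = 3%:R -> False.
Proof.
move=> n3 N3.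
have E1 := Gstar hbe Hs 1 0 1.
have E2 := Gstar hbe Hs 1 1 1.
rewrite !Gval ?nz1 ?nz2 ?addr0 // n3 in E1 E2.
have hal : al = alb + 5%:R / 2%:R.
  move: N3; linK (1 : C).
have h1 : q * (5%:R + 4%:R * alb - al) = 0.
  move: E1; linK alb.
have halb : alb = - 5%:R / 6%:R.
  move: h1; rewrite hal => /eqP; rewrite mulf_eq0 (negbTE nq) /= => /eqP.
  linK (3%:R^-1 : C).
rewrite hal halb in E2.
suff : q = 0 by move/eqP; rewrite (negbTE nq).
move: E2; linK (5%:R / 2%:R : C).
Qed.

Lemma big_false m : n = m.+4 -> False.
Proof.
move=> hn.
have z : (0 : C) ^+ n = 0 by rewrite hn exprS mul0r.
have Fz : forall t : C, t + 1 != 0 -> (1 + alb * t) * (t + 1) ^+ n - (1 + al * t)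
   - t * ((t + al) * t ^+ n + (2%:R^-1 - t) * (t + 1) ^+ n) = 0.
  move=> t nt.
  have nt' : 1 + t != 0 by rewrite addrC.
  have E := Gstar hbe Hs 1 0 t.
  rewrite (Gval _ nt') !(Gval _ nz1) in E.
  rewrite !addr0 !add0r z expr1n (addrC 1 t) in E.
  move: E; linK (2%:R * alb / q).
pose B : {poly C} := ('X + 1) ^+ n.
pose Fp : {poly C} := B + alb *: ('X * B) - 1 - al *: 'X - 'X * ('X * 'X^n)
   - al *: ('X * 'X^n) - 2%:R^-1 *: ('X * B) + 'X * ('X * B).
have F0 : Fp = 0.
  have : ('X - (-1)%:P) * Fp = 0.
    apply: poly_eq0_pt => t.
    rewrite hornerM hornerD hornerN hornerX hornerC opprK.
    have [->|nt] := eqVneq (t + 1) 0; first by rewrite mul0r.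
    rewrite -[RHS](mulr0 (t + 1)) -(Fz t nt); congr (_ * _).
    rewrite /Fp /B !(hornerD, hornerN, hornerM, hornerZ, hornerX, hornerXn, horner_exp, hornerC).
    ring.
  by move/eqP; rewrite mulf_eq0 polyXsubC_eq0 /= => /eqP.
have e2 := congr1 (fun p : {poly C} => p`_2) F0.
have e3 := congr1 (fun p : {poly C} => p`_3) F0.
rewrite /Fp /B /= !(coefD, coefB, coefN, coefZ, coefXM, coefXn, coef1, coefX, coef0, coefXD1) hn /= in e2 e3.
have h2 : ('C(m.+4, 2) * 2 = m.+4 * m.+3)%N.
  by have := bin_ffact m.+4 2; rewrite /= !ffactnS ffactn0 muln1.
have h3 : ('C(m.+4, 3) * 6 = m.+4 * m.+3 * m.+2)%N.
  by have := bin_ffact m.+4 3; rewrite /= !ffactnS ffactn0 muln1 mulnA.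
have c2 : 'C(m.+4, 2)%:R = (m.+4)%:R * (m.+3)%:R / 2%:R :> C.
  by rewrite -natrM -h2 natrM mulfK // pnatr_eq0.
have c3 : 'C(m.+4, 3)%:R = (m.+4)%:R * (m.+3)%:R * (m.+2)%:R / 6%:R :> C.
  by rewrite -!natrM -h3 natrM mulfK // pnatr_eq0.
rewrite c2 c3 bin1 bin0 in e2 e3.
have n4 : (m.+4)%:R != 0 :> C by rewrite pnatr_eq0.
have halb : alb = ((m.+4)%:R / 2%:R - 1 - (m.+4)%:R * (m.+3)%:R / 2%:R) / (m.+4)%:R.
  move: e2; linK ((m.+4)%:R^-1 : C).
rewrite halb in e3.
have : ((m.+4 * m.+4.+1 * m.+4.+2 * m.+1)%N%:R : C) = 0.
  rewrite !natrM; move: e3; linK (- 12%:R * (m.+4)%:R : C).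
by move/eqP; rewrite pnatr_eq0.
Qed.
End Cl2.


Section E.
Variable C : numClosedFieldType.
Implicit Types p r : {poly {poly C}}.
Lemma ev2D p r d l : ev2 (p + r) d l = ev2 p d l + ev2 r d l.
Proof. by rewrite /ev2 !hornerD. Qed.
Lemma ev2B p r d l : ev2 (p - r) d l = ev2 p d l - ev2 r d l.
Proof. by rewrite /ev2 !hornerD !hornerN. Qed.
Lemma ev2X p k d l : ev2 (p ^+ k) d l = ev2 p d l ^+ k.
Proof. by rewrite /ev2 !horner_exp. Qed.
Lemma ev2C (k d l : C) : ev2 (cst k) d l = k.
Proof. by rewrite /ev2 /cst !hornerC. Qed.
Lemma ev21 d l : ev2 (1 : {poly {poly C}}) d l = 1.
Proof. by rewrite /ev2 -!polyC1 !hornerC. Qed.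
Lemma ev2Dpar d l : ev2 (Dpar C) d l = d.
Proof. by rewrite /ev2 /Dpar hornerC hornerX. Qed.
Lemma ev2Lam d l : ev2 (Lam C) d l = l.
Proof. by rewrite /ev2 /Lam hornerX hornerC. Qed.
Definition ev2E := (ev2D, ev2B, ev2M, ev2X, ev2C, ev21, ev2Dpar, ev2Lam).
Lemma ev2_eq p r : (forall d l, ev2 p d l = ev2 r d l) -> p = r.
Proof.
move=> H; apply/eqP; rewrite -subr_eq0; apply/eqP; apply: ev2_eq0 => d l.
by rewrite ev2B H subrr.
Qed.
End E.

Section F.
Variables (C : numClosedFieldType) (c al be alb beb : C).
Definition Ys (g : {poly {poly C}}) := forall d l m,
  ev2 g (d+l) m * (d + alb * l + beb) - (d + m + al * l + be) * ev2 g d m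
  = (l / 2%:R - m + c) * ev2 g d (l+m).

Hypothesis hbe : be - beb + c = 0.
Let Hb : be = beb - c.
Proof. by apply/eqP; rewrite -subr_eq0; apply/eqP; rewrite -hbe; ring. Qed.

Lemma famA k : al - alb = - (2%:R)^-1 -> Ys (cst k * 1).
Proof.
move=> ha d l m; have Ha : al = alb - 2%:R^-1 by rewrite -ha; ring.
rewrite !ev2E Hb Ha; by field.
Qed.

Lemma famB k : al - alb = (2%:R)^-1 -> Ys (cst k * (Dpar C + cst (2%:R * alb) * Lam C
                               + cst (- (2%:R * alb * c) + beb))).
Proof.
move=> ha d l m; have Ha : al = alb + 2%:R^-1 by rewrite -ha; ring.
rewrite !ev2E Hb Ha; by field.
Qed.

Lemma famC k : al = 1 -> alb = - (2%:R)^-1 ->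
  Ys (cst k * (Dpar C ^+ 2 + cst (2%:R * (1 + 2%:R * alb)) * Dpar C * Lam C
                       + cst (2%:R * alb) * Lam C ^+ 2
                       + cst (2%:R * beb - 2%:R * (1 + 2%:R * alb) * c) * Dpar C
                       + cst (- (4%:R * c * alb) + 2%:R * (1 + 2%:R * alb) * beb) * Lam C
                       + cst (beb ^+ 2 - 2%:R * c * beb * (1 + 2%:R * alb)
                              + 2%:R * c ^+ 2 * alb))).
Proof.
move=> Ha Hab d l m.
rewrite !ev2E Hb Ha Hab; by field.
Qed.
End F.

Section Cls.
Variables (C : numClosedFieldType) (c al be alb beb : C) (g : {poly {poly C}}).
Hypothesis nalb : alb != 0.
Hypothesis hbe : be - beb + c = 0.
Hypothesis Hs : Ys c al be alb beb g.

Lemma key_to_g (F : {poly {poly C}}) :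
  (forall x y, G c beb g x y = ev2 F (x - beb) (y + c)) -> g = F.
Proof.
move=> K; apply: ev2_eq => d l; by rewrite (Gev c beb) K addrK subrK.
Qed.

Lemma classify : g != 0 -> exists2 k : C, k != 0 &
            [\/ al - alb = - (2%:R)^-1 /\ g = cst k * 1,
                al - alb = (2%:R)^-1 /\
                  g = cst k * (Dpar C + cst (2%:R * alb) * Lam C
                               + cst (- (2%:R * alb * c) + beb))
              | al = 1 /\ alb = - (2%:R)^-1 /\
                  g = cst k * (Dpar C ^+ 2 + cst (2%:R * (1 + 2%:R * alb)) * Dpar C * Lam C
                       + cst (2%:R * alb) * Lam C ^+ 2
                       + cst (2%:R * beb - 2%:R * (1 + 2%:R * alb) * c) * Dpar C
                       + cst (- (4%:R * c * alb) + 2%:R * (1 + 2%:R * alb) * beb) * Lam C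
                       + cst (beb ^+ 2 - 2%:R * c * beb * (1 + 2%:R * alb)
                              + 2%:R * c ^+ 2 * alb))].
Proof.
move=> ng; have [n [q [nq N GQ]]] := Qform nalb hbe Hs ng.
case: n N GQ => [|[|[|[|m]]]] N GQ.
- exists q => //; apply: Or31; split; first by move: N; linK (1 : C).
  have Ha : al = alb - 2%:R^-1 by move: N; linK (1 : C).
  apply: key_to_g => x y; rewrite !ev2E.
  have [->|nx] := eqVneq x 0; first by rewrite GQ; ring.
  rewrite (Gval nalb hbe Hs GQ _ nx) Ha; field; by rewrite nx nalb.
- exists (q / (2%:R * alb)); first by rewrite mulf_neq0 // invr_eq0 mulf_neq0 // pnatr_eq0.
  apply: Or32; split; first by move: N; linK (1 : C).
  have Ha : al = alb + 2%:R^-1 by move: N; linK (1 : C).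
  apply: key_to_g => x y; rewrite !ev2E.
  have [->|nx] := eqVneq x 0; first by rewrite GQ; field.
  rewrite (Gval nalb hbe Hs GQ _ nx) Ha; field; by rewrite nx nalb.
- have Ha : al = alb + 3%:R / 2%:R by move: N; linK (1 : C).
  have E1 := Gstar hbe Hs 1 0 1.
  rewrite (Gval nalb hbe Hs GQ _ (@nz2 C)) !(Gval nalb hbe Hs GQ _ (@nz1 C)) ?addr0 in E1.
  have h1 : q * (2%:R + 2%:R * alb - al) = 0 by move: E1; linK alb.
  have Hab : alb = - 2%:R^-1.
    move: h1; rewrite Ha => /eqP; rewrite mulf_eq0 (negbTE nq) /= => /eqP.
    linK (1 : C).
  have Ha1 : al = 1 by rewrite Ha Hab; field.
  exists (- q); first by rewrite oppr_eq0.
  apply: Or33; split => //; split => //.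
  apply: key_to_g => x y; rewrite !ev2E.
  have [->|nx] := eqVneq x 0; first by rewrite GQ Hab; field.
  rewrite (Gval nalb hbe Hs GQ _ nx) Ha1 Hab; field; by rewrite nx.
- by case: (n3_false nalb hbe Hs nq GQ erefl N).
- by case: (big_false nalb hbe Hs nq GQ (erefl _)).
Qed.
End Cls.


Theorem theorem4p8 (C : numClosedFieldType) (c al be alb beb : C) :
  al != 0 -> alb != 0 -> be != beb -> be - beb + c = 0 ->
  [/\ (forall f g h : {poly {poly C}}, is_ext c al be alb beb f g h -> h = 0),
      (forall f g h : {poly {poly C}}, is_ext c al be alb beb f g h ->
         exists g' h' : {poly {poly C}},
           is_ext c al be alb beb 0 g' h' /\ ext_equiv al be alb beb f g h 0 g' h'),
      (forall g : {poly {poly C}}, is_ext c al be alb beb 0 g 0 ->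
         (~ ext_trivial al be alb beb 0 g 0 <-> g != 0))
    & (forall g : {poly {poly C}}, g != 0 ->
         (is_ext c al be alb beb 0 g 0 <->
          exists2 k : C, k != 0 &
            [\/ al - alb = - (2%:R)^-1 /\ g = cst k * 1,
                al - alb = (2%:R)^-1 /\
                  g = cst k * (Dpar C + cst (2%:R * alb) * Lam C
                               + cst (- (2%:R * alb * c) + beb))
              | al = 1 /\ alb = - (2%:R)^-1 /\
                  g = cst k * (Dpar C ^+ 2 + cst (2%:R * (1 + 2%:R * alb)) * Dpar C * Lam C
                       + cst (2%:R * alb) * Lam C ^+ 2
                       + cst (2%:R * beb - 2%:R * (1 + 2%:R * alb) * c) * Dpar C
                       + cst (- (4%:R * c * alb) + 2%:R * (1 + 2%:R * alb) * beb) * Lam C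
                       + cst (beb ^+ 2 - 2%:R * c * beb * (1 + 2%:R * alb)
                              + 2%:R * c ^+ 2 * alb))]))].
Proof.
Proof.
move=> nal nalb nbe hbe; split.
- move=> f g h H; exact: ext_h0 H.
- move=> f g h H; have h0 := ext_h0 H; subst h.
  exists g, 0; split; first by apply: backY; exact: extY H.
  exact: equiv_f nbe H.
- move=> g H; split.
  + move=> nt; apply/eqP => g0; apply: nt; rewrite g0; exact: triv0.
  + move=> ng tr; move/eqP: ng; apply; exact: triv_g tr.
- move=> g ng; split.
  + move=> H; exact: classify nalb hbe (extY H) ng.
  + case=> k nk [[ha ->]|[ha ->]|[ha [hb ->]]]; apply: backY.
    * exact: famA.
    * exact: famB.
    * exact: famC.
Qed.
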